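(* Under the hypotheses (torsion-free $G$; $l:G\to\mathbb{Z}^n$ a $\delta$-regular $\delta$-hyperbolic length function with (A) $ht(\delta)=1$, (B) $l(g^m)<l(g)$ for nonzero integer $m$ implies $ht(l(g)-l(g^m))=1$, (C) $l(g)>0$ for $g\ne1$), let $1\le k<n$, $h\in G_{k+1}\setminus G_k$, $C=G_k\cap hG_kh^{-1}$, and let $E$ be the set of elements of $C$ that act elliptically on the $\mathbb{Z}^{n-1}$-tree $\Gamma$. Then $E$ is a normal subgroup of $C$ and $C/E$ is free abelian of rank at most $k-1$.
   Context: $\mathbb{Z}^m$ carries the right lexicographic order; $ht(a)$ is the largest index with nonzero coordinate, $ht(0)=0$. Length function: $l(1)=0$, $l(g)\ge0$, $l(g^{-1})=l(g)$, $l(gh)\le l(g)+l(h)$; $c(g,h)=\tfrac12(l(g)+l(h)-l(g^{-1}h))$; $\delta$-hyperbolic: $c(f,g)\ge\min\{c(f,h),c(g,h)\}-\delta$; $\delta$-regular: for all $g,h$ exist $g_c,h_c,g_d,h_d$ with $l(g_c)=l(h_c)=c(g,h)$, $g=g_cg_d$, $h=h_ch_d$, $l(g)=l(g_c)+l(g_d)$, $l(h)=l(h_c)+l(h_d)$, $l(g_c^{-1}h_c)\le4\delta$. $G_k=\{g\in G\mid ht(l(g))\le k\}$. $l_1(g)=(a_2,\dots,a_n)$ where $l(g)=(a_1,\dots,a_n)$. $\Gamma$ is the $\mathbb{Z}^{n-1}$-tree obtained from $(G,l_1)$ by Chiswell's construction: a $\mathbb{Z}^{n-1}$-tree with isometric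 $G$-action and base point $x_0$ with $l_1(g)=d(x_0,gx_0)$ for all $g$ and every point on some segment $[x_0,gx_0]$. An element acts elliptically if it fixes a point of $\Gamma$. *)

(* Defs.v *)
From HB Require Import structures.
From mathcomp Require Import all_boot all_order all_algebra.
Set Implicit Arguments. Unset Strict Implicit. Unset Printing Implicit Defensive.
Import Order.TTheory GRing.Theory Num.Theory.
Local Open Scope ring_scope.

(* Z^n is 'rV[int]_n; coordinate i (1-based in the paper) is entry i-1.
   Right lexicographic order: compare the highest index first. *)
Definition lexlt (n : nat) (a b : 'rV[int]_n) : bool :=
  [exists i : 'I_n, (a 0 i < b 0 i) &&
     [forall j : 'I_n, (i < j)%N ==> (a 0 j == b 0 j)]].
Definition lexle (n : nat) (a b : 'rV[int]_n) : bool := (a == b) || lexlt a b.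
Definition lexmin (n : nat) (a b : 'rV[int]_n) : 'rV[int]_n :=
  if lexle a b then a else b.
Definition lexabs (n : nat) (a : 'rV[int]_n) : 'rV[int]_n :=
  if lexle 0 a then a else - a.

(* ht(a) = largest (1-based) index with nonzero coordinate; ht 0 = 0 *)
Definition ht (n : nat) (a : 'rV[int]_n) : nat :=
  \max_(i < n | a 0 i != 0) (nat_of_ord i).+1.

Definition drop1 (n : nat) (a : 'rV[int]_n) : 'rV[int]_(n.-1) :=
  \row_(j < n.-1) oapp (fun i : 'I_n => a 0 i) 0 (insub (j.+1)%N).

Definition is_group (G : Type) (mul : G -> G -> G) (e : G) (inv : G -> G) : Prop :=
  (forall x y z, mul x (mul y z) = mul (mul x y) z) /\
  (forall x, mul e x = x) /\ (forall x, mul x e = x) /\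
  (forall x, mul (inv x) x = e) /\ (forall x, mul x (inv x) = e).

Fixpoint gpow (G : Type) (mul : G -> G -> G) (e : G) (g : G) (k : nat) : G :=
  match k with O => e | S k' => mul g (gpow mul e g k') end.

Definition gzpow (G : Type) (mul : G -> G -> G) (e : G) (inv : G -> G)
  (g : G) (m : int) : G :=
  match m with
  | Posz k => gpow mul e g k
  | Negz k => inv (gpow mul e g k.+1)
  end.

Definition torsion_free (G : Type) (mul : G -> G -> G) (e : G) : Prop :=
  forall g (k : nat), (0 < k)%N -> gpow mul e g k = e -> g = e.

Definition is_length_function (G : Type) (mul : G -> G -> G) (e : G)
  (inv : G -> G) (n : nat) (l : G -> 'rV[int]_n) : Prop :=
  l e = 0 /\ (forall g, lexle 0 (l g)) /\ (forall g, l (inv g) = l g) /\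
  (forall g h, lexle (l (mul g h)) (l g + l h)).

(* 2 c(g,h) = l(g) + l(h) - l(g^-1 h)  (c itself may live in (1/2)Z^n) *)
Definition c2 (G : Type) (mul : G -> G -> G) (inv : G -> G) (n : nat)
  (l : G -> 'rV[int]_n) (g h : G) : 'rV[int]_n :=
  l g + l h - l (mul (inv g) h).

(* c(f,g) >= min{c(f,h), c(g,h)} - delta, multiplied by 2 *)
Definition hyperbolic (G : Type) (mul : G -> G -> G) (inv : G -> G) (n : nat)
  (l : G -> 'rV[int]_n) (delta : 'rV[int]_n) : Prop :=
  forall f g h, lexle (lexmin (c2 mul inv l f h) (c2 mul inv l g h) - delta *+ 2)
                      (c2 mul inv l f g).

Definition regular (G : Type) (mul : G -> G -> G) (inv : G -> G) (n : nat)
  (l : G -> 'rV[int]_n) (delta : 'rV[int]_n) : Prop :=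
  forall g h, exists gc hc gd hd,
    [/\ (l gc) *+ 2 = c2 mul inv l g h, (l hc) *+ 2 = c2 mul inv l g h,
        g = mul gc gd, h = mul hc hd &
        [/\ l g = l gc + l gd, l h = l hc + l hd &
        lexle (l (mul (inv gc) hc)) (delta *+ 4)]].

Definition is_lambda_metric (m : nat) (X : Type) (d : X -> X -> 'rV[int]_m) : Prop :=
  (forall x y, lexle 0 (d x y)) /\ (forall x y, d x y = 0 <-> x = y) /\
  (forall x y, d x y = d y x) /\ (forall x y z, lexle (d x z) (d x y + d y z)).

Definition is_segment (m : nat) (X : Type) (d : X -> X -> 'rV[int]_m)
  (x y : X) (S : X -> Prop) : Prop :=
  exists (a b : 'rV[int]_m) (sigma : 'rV[int]_m -> X),
    [/\ lexle a b, sigma a = x, sigma b = y,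
        (forall s t, lexle a s -> lexle s b -> lexle a t -> lexle t b ->
           d (sigma s) (sigma t) = lexabs (t - s)) &
        (forall z, S z <-> exists t, [/\ lexle a t, lexle t b & sigma t = z])].

(* Lambda-tree (Alperin-Bass / Chiswell axioms) *)
Definition is_lambda_tree (m : nat) (X : Type) (d : X -> X -> 'rV[int]_m) : Prop :=
  is_lambda_metric d /\
  (forall x y, exists S, is_segment d x y S) /\
  (forall x y z S1 S2, is_segment d x y S1 -> is_segment d y z S2 ->
     (forall w, S1 w -> S2 w -> w = y) ->
     is_segment d x z (fun w => S1 w \/ S2 w)) /\
  (forall x y z S1 S2, is_segment d x y S1 -> is_segment d x z S2 ->
     exists w, is_segment d x w (fun v => S1 v /\ S2 v)).

Definition is_isometric_action (G : Type) (mul : G -> G -> G) (e : G)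
  (m : nat) (X : Type) (d : X -> X -> 'rV[int]_m) (act : G -> X -> X) : Prop :=
  (forall x, act e x = x) /\ (forall g h x, act (mul g h) x = act g (act h x)) /\
  (forall g x y, d (act g x) (act g y) = d x y).

(* Gamma: the Z^(n-1)-tree from Chiswell's construction applied to (G, l_1),
   characterized as in the paper *)
Definition chiswell_tree (G : Type) (mul : G -> G -> G) (e : G) (n : nat)
  (l : G -> 'rV[int]_n) (X : Type) (d : X -> X -> 'rV[int]_(n.-1))
  (act : G -> X -> X) (x0 : X) : Prop :=
  [/\ is_lambda_tree d, is_isometric_action mul e d act,
      (forall g, drop1 (l g) = d x0 (act g x0)) &
      (forall p, exists g S, is_segment d x0 (act g x0) S /\ S p)].

Definition elliptic (G X : Type) (act : G -> X -> X) (g : G) : Prop :=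
  exists x, act g x = x.

Definition Gk (G : Type) (n : nat) (l : G -> 'rV[int]_n) (k : nat) (g : G) : Prop :=
  (ht (l g) <= k)%N.

(* Main.v *)
Require Import Defs.
From mathcomp Require Import all_boot all_order all_algebra zify ring.
From Stdlib Require Import Classical.
Import Order.TTheory GRing.Theory Num.Theory.
Set Implicit Arguments. Unset Strict Implicit. Unset Printing Implicit Defensive.
Local Open Scope ring_scope.

Ltac veq := apply/rowP => ?; rewrite !mxE; ring.

Section Lex.
Variable m : nat.
Implicit Types a b c u v : 'rV[int]_m.

Lemma lexltP a b : reflect (exists i : 'I_m, a 0 i < b 0 i /\
   forall j : 'I_m, (i < j)%N -> a 0 j = b 0 j) (lexlt a b).
Proof.
apply: (iffP existsP) => [[i /andP[lt /forallP H]]|[i [lt H]]]; exists i.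
  by split => // j ij; apply/eqP/(implyP (H j) ij).
apply/andP; split => //; apply/forallP => j; apply/implyP => ij.
by rewrite H.
Qed.

Lemma lexlt_irr a : ~~ lexlt a a.
Proof. by apply/lexltP => -[i []]; rewrite ltxx. Qed.

Lemma lexlt_trans a b c : lexlt a b -> lexlt b c -> lexlt a c.
Proof.
move=> /lexltP[i [lti Hi]] /lexltP[i' [lti' Hi']]; apply/lexltP.
case: (ltngtP i i') => [ii'|i'i|/val_inj ii'].
- exists i'; split; first by rewrite Hi.
  by move=> j ij; rewrite Hi ?Hi' //; apply: ltn_trans ij.
- exists i; split; first by rewrite -(Hi' i i'i).
  by move=> j ij; rewrite Hi ?Hi' //; apply: ltn_trans ij.
- subst i'; exists i; split; first exact: lt_trans lti'.
  by move=> j ij; rewrite Hi ?Hi'.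
Qed.

Lemma lexlt_add a b c : lexlt (a + c) (b + c) = lexlt a b.
Proof.
rewrite /lexlt; apply: eq_existsb => i; rewrite !mxE ltrD2r; congr andb.
by apply: eq_forallb => j; rewrite !mxE (inj_eq (addIr _)).
Qed.

Lemma top_index v : v != 0 -> exists i : 'I_m, v 0 i != 0 /\
  forall j : 'I_m, (i < j)%N -> v 0 j = 0.
Proof.
move=> nz.
have [i0 Hi0] : exists i0 : 'I_m, v 0 i0 != 0.
  apply/existsP; apply: contraR nz => /existsPn H.
  by apply/eqP/rowP => i; rewrite mxE; move/negbNE/eqP: (H i).
case: (@arg_maxnP _ i0 (fun i : 'I_m => v 0 i != 0) (fun i : 'I_m => nat_of_ord i) Hi0) => i Hi Hmax.
exists i; split => // j ij; apply/eqP; apply: contraTT ij => Hj.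
by rewrite -leqNgt; apply: Hmax.
Qed.

Lemma lexlt_total a b : a != b -> lexlt a b || lexlt b a.
Proof.
move=> nab; have : b - a != 0 by rewrite subr_eq0 eq_sym.
move=> /top_index[i [Hi Ht]].
have He (j : 'I_m) : (i < j)%N -> a 0 j = b 0 j.
  by move=> ij; move: (Ht j ij); rewrite !mxE => /eqP; rewrite subr_eq0 => /eqP.
move: Hi; rewrite !mxE subr_eq0 => Hi.
case: (ltgtP (a 0 i) (b 0 i)) Hi => // [lt|lt] _.
  by apply/orP; left; apply/lexltP; exists i.
apply/orP; right; apply/lexltP; exists i; split => // j ij; by rewrite He.
Qed.

Lemma lexle_refl a : lexle a a.
Proof. by rewrite /lexle eqxx. Qed.

Lemma lexle_trans a b c : lexle a b -> lexle b c -> lexle a c.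
Proof.
rewrite /lexle => /orP[/eqP->|ab] // /orP[/eqP<-|bc]; rewrite ?ab ?orbT //.
by rewrite (lexlt_trans ab bc) orbT.
Qed.

Lemma lexle_anti a b : lexle a b -> lexle b a -> a = b.
Proof.
rewrite /lexle => /orP[/eqP->|ab] // /orP[/eqP->|ba] //.
by move: (lexlt_irr a); rewrite (lexlt_trans ab ba).
Qed.

Lemma lexle_total a b : lexle a b \/ lexle b a.
Proof.
rewrite /lexle; case: (eqVneq a b) => [->|nab]; first by left.
by case/orP: (lexlt_total nab) => H; [left|right]; rewrite H orbT.
Qed.

Lemma lexle_add a b c : lexle (a + c) (b + c) = lexle a b.
Proof. by rewrite /lexle lexlt_add (inj_eq (addIr _)). Qed.

Lemma lexle_addl a b c : lexle (c + a) (c + b) = lexle a b.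
Proof. by rewrite (addrC c a) (addrC c b) lexle_add. Qed.

Lemma lexltW a b : lexlt a b -> lexle a b.
Proof. by rewrite /lexle => ->; rewrite orbT. Qed.

Lemma lexlt_neq a b : lexlt a b -> a != b.
Proof. by move=> H; apply/eqP => E; move: H; rewrite E (negbTE (lexlt_irr b)). Qed.

Lemma lexlt_def a b : lexlt a b = (a != b) && lexle a b.
Proof.
apply/idP/andP => [H|[nab]]; first by split; [apply: lexlt_neq|apply: lexltW].
by rewrite /lexle (negbTE nab) /=.
Qed.

Lemma lexle_lt_trans a b c : lexle a b -> lexlt b c -> lexlt a c.
Proof. by rewrite /lexle => /orP[/eqP->|ab] // bc; apply: lexlt_trans bc. Qed.

Lemma lexlt_le_trans a b c : lexlt a b -> lexle b c -> lexlt a c.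
Proof. by move=> ab /orP[/eqP<-|bc] //; apply: lexlt_trans bc. Qed.

Lemma lexlt_nle a b : lexlt a b -> ~ lexle b a.
Proof.
move=> ab ba; move: (lexlt_irr a).
by rewrite (lexlt_le_trans ab ba).
Qed.

Lemma lexnle_lt a b : ~ lexle a b -> lexlt b a.
Proof.
move=> nab; case: (lexle_total a b) => // ba.
rewrite lexlt_def ba andbT; apply/eqP => E; apply: nab; rewrite E; exact: lexle_refl.
Qed.

Lemma lexleD a b c d : lexle a b -> lexle c d -> lexle (a + c) (b + d).
Proof.
move=> ab cd; apply: (@lexle_trans _ (b + c)); first by rewrite lexle_add.
by rewrite (addrC b c) (addrC b d) lexle_add.
Qed.

Lemma lexltD a b c d : lexlt a b -> lexle c d -> lexlt (a + c) (b + d).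
Proof.
move=> ab cd; apply: (@lexlt_le_trans _ (b + c)); first by rewrite lexlt_add.
by rewrite (addrC b c) (addrC b d) lexle_add.
Qed.

Lemma lexle_sub a b : lexle a b = lexle 0 (b - a).
Proof. by rewrite -(lexle_add a b (- a)) subrr. Qed.

Lemma lexlt_sub a b : lexlt a b = lexlt 0 (b - a).
Proof. by rewrite -(lexlt_add a b (- a)) subrr. Qed.

Lemma lexle_opp a b : lexle (- a) (- b) = lexle b a.
Proof. by rewrite lexle_sub [in RHS]lexle_sub opprK addrC. Qed.

Lemma lexlt_opp a b : lexlt (- a) (- b) = lexlt b a.
Proof. by rewrite lexlt_sub [in RHS]lexlt_sub opprK addrC. Qed.

Lemma lexabs_pos v : lexle 0 v -> lexabs v = v.
Proof. by rewrite /lexabs => ->. Qed.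

Lemma lexabs_opp v : lexabs (- v) = lexabs v.
Proof.
rewrite /lexabs; case: (eqVneq v 0) => [->|nz]; first by rewrite !oppr0.
case H: (lexle 0 v).
  have nH : lexle 0 (- v) = false.
    apply/negP; rewrite -oppr0 lexle_opp => H'; apply: (negP nz); apply/eqP; exact: lexle_anti.
  by rewrite nH opprK.
have H' : lexle 0 (- v).
  rewrite -oppr0 lexle_opp; case: (lexle_total 0 v) => //; by rewrite H.
by rewrite H'.
Qed.

Lemma htP v t : reflect (forall j : 'I_m, (t <= j)%N -> v 0 j = 0) (ht v <= t)%N.
Proof.
rewrite /ht; apply: (iffP idP) => [/bigmax_leqP H j tj|H].
  apply/eqP; apply: contraTT tj => /H; rewrite -ltnNge //.
apply/bigmax_leqP => j nz; rewrite ltnNge; apply: contra nz => /H ->; by [].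
Qed.

Lemma ht_max v : (ht v <= m)%N.
Proof. by apply/htP => j; rewrite leqNgt ltn_ord. Qed.

Lemma ht0 v : (ht v <= 0)%N -> v = 0.
Proof. by move/htP => H; apply/rowP => j; rewrite mxE H. Qed.

Lemma htD a b t : (ht a <= t)%N -> (ht b <= t)%N -> (ht (a + b) <= t)%N.
Proof. by move=> /htP Ha /htP Hb; apply/htP => j tj; rewrite mxE Ha ?Hb ?addr0. Qed.

Lemma htN a t : (ht a <= t)%N -> (ht (- a) <= t)%N.
Proof. by move=> /htP Ha; apply/htP => j tj; rewrite mxE Ha ?oppr0. Qed.

Lemma htB a b t : (ht a <= t)%N -> (ht b <= t)%N -> (ht (a - b) <= t)%N.
Proof. by move=> Ha Hb; apply: htD => //; apply: htN. Qed.

Lemma lexlt0_top v i : lexlt 0 v -> v 0 i != 0 ->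
  (forall j : 'I_m, (i < j)%N -> v 0 j = 0) -> 0 < v 0 i.
Proof.
move=> /lexltP[i' [lt H]] nz Ht; move: lt; rewrite mxE => lt.
case: (ltngtP i i') => [ii'|i'i|/val_inj ->] //.
- by move: (Ht _ ii'); move: lt => /[swap] ->; rewrite ltxx.
- by move: (H _ i'i); rewrite mxE => /esym E; move: nz; rewrite E eqxx.
Qed.

Lemma ht_le a b : lexle 0 a -> lexle a b -> (ht a <= ht b)%N.
Proof.
move=> a0 ab; apply/htP => j tj; apply/eqP; apply: contraT => nz.
have : a != 0 by apply/eqP => E; move: nz; rewrite E mxE eqxx.
move=> /top_index [i [Hi Ht]].
have ji : (j <= i)%N by rewrite leqNgt; apply/negP => /Ht /eqP; apply/negP.
have hb (k : 'I_m) : (ht b <= k)%N -> b 0 k = 0 by move: k; apply/htP.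
have a0' : lexlt 0 a by rewrite lexlt_def a0 andbT; apply/eqP => E; move: Hi; rewrite -E mxE eqxx.
have pos := lexlt0_top a0' Hi Ht.
case/orP: ab => [/eqP E|/lexltP[i' [lt H]]].
  by move: Hi; rewrite E hb ?eqxx //; apply: leq_trans tj ji.
case: (ltngtP i i') => [ii'|i'i|/val_inj E].
- move: lt; rewrite Ht // hb ?ltxx //.
  by apply: leq_trans (ltnW ii'); apply: leq_trans tj ji.
- move: (H _ i'i) => E; move: pos; rewrite E hb ?ltxx //; apply: leq_trans tj ji.
- subst i'; move: lt; rewrite hb; last by apply: leq_trans tj ji.
  by move=> lt; move: (lt_trans pos lt); rewrite ltxx.
Qed.

Lemma ht_bound v (s : 'rV[int]_m) : lexle (- s) v -> lexle v s -> (ht v <= ht s)%N.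
Proof.
move=> H1 H2; case: (lexle_total 0 v) => H; first exact: ht_le.
have: (ht (- v) <= ht s)%N.
  apply: ht_le; first by rewrite -oppr0 lexle_opp.
  by rewrite -(opprK s) lexle_opp.
by move=> Hn; rewrite -(opprK v); apply: htN.
Qed.

Lemma lt_small_large (s L : 'rV[int]_m) t : (ht s <= t)%N -> lexle 0 L -> ~~ (ht L <= t)%N ->
  lexlt s L.
Proof.
move=> /htP Hs L0 /htP HL.
have [j [tj Lj]] : exists j : 'I_m, (t <= j)%N /\ L 0 j != 0.
  apply: NNPP => H; apply: HL => j tj; apply/eqP; apply: NNPP => nz.
  by apply: H; exists j; split => //; apply/negP.
have : L != 0 by apply/eqP => E; move: Lj; rewrite E mxE eqxx.
move=> /top_index [i [Hi Ht]].
have ji : (j <= i)%N by rewrite leqNgt; apply/negP => /Ht /eqP; apply/negP.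
have L0' : lexlt 0 L by rewrite lexlt_def L0 andbT; apply/eqP => E; move: Hi; rewrite -E mxE eqxx.
have pos := lexlt0_top L0' Hi Ht.
apply/lexltP; exists i; split.
  by rewrite Hs //; apply: leq_trans tj ji.
move=> k ik; rewrite Ht // Hs //; apply: leq_trans tj (leq_trans ji (ltnW ik)).
Qed.

End Lex.
Section Tree.
Variables (m : nat) (X : Type) (d : X -> X -> 'rV[int]_m).
Hypothesis Ht : is_lambda_tree d.

Let Hmet : is_lambda_metric d. Proof. by case: Ht. Qed.
Lemma d_nn x y : lexle 0 (d x y). Proof. by case: Hmet. Qed.
Lemma d_zero x y : d x y = 0 -> x = y. Proof. by case: Hmet => _ [H _] /H. Qed.
Lemma d_self x : d x x = 0. Proof. by case: Hmet => _ [H _]; apply/H. Qed.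
Lemma d_sym x y : d x y = d y x. Proof. by case: Hmet => _ [_ [H _]]. Qed.
Lemma d_tri x y z : lexle (d x z) (d x y + d y z). Proof. by case: Hmet => _ [_ [_ H]]. Qed.

Lemma seg_dist x y S z : is_segment d x y S -> S z -> d x z + d z y = d x y.
Proof.
move=> [a [b [sg [ab sa sb Hi HS]]]] /HS [t [hat tb <-]].
have ab' : lexle t b := tb.
rewrite -sa -sb !Hi ?lexle_refl //.
rewrite !lexabs_pos -?lexle_sub //.
veq.
Qed.

Lemma seg_inj x y S z z' : is_segment d x y S -> S z -> S z' -> d x z = d x z' -> z = z'.
Proof.
move=> [a [b [sg [ab sa sb Hi HS]]]] /HS [t [hat tb <-]] /HS [t' [hat' tb' <-]].
rewrite -sa !Hi ?lexle_refl // !lexabs_pos -?lexle_sub // => E.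
by have -> : t = t' by rewrite -(subrK a t) E subrK.
Qed.

Lemma seg_point x y S mu : is_segment d x y S -> lexle 0 mu -> lexle mu (d x y) ->
  exists z, S z /\ d x z = mu.
Proof.
move=> [a [b [sg [ab sa sb Hi HS]]]] m0 mle.
have hat : lexle a (mu + a) by rewrite -{1}(add0r a) lexle_add.
have tb : lexle (mu + a) b.
  move: mle; rewrite -sa -sb Hi ?lexle_refl // lexabs_pos -?lexle_sub //.
  by rewrite -(lexle_add _ _ a) subrK.
exists (sg (mu + a)); split; first by apply/HS; exists (mu + a).
by rewrite -sa Hi ?lexle_refl // lexabs_pos -?lexle_sub // addrK.
Qed.

Lemma seg_x x y S : is_segment d x y S -> S x.
Proof. move=> [a [b [sg [ab sa sb Hi HS]]]]; apply/HS; exists a; split => //; exact: lexle_refl. Qed.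

Lemma seg_y x y S : is_segment d x y S -> S y.
Proof. move=> [a [b [sg [ab sa sb Hi HS]]]]; apply/HS; exists b; split => //; exact: lexle_refl. Qed.

Lemma seg_rev x y S : is_segment d x y S -> is_segment d y x S.
Proof.
move=> [a [b [sg [ab sa sb Hi HS]]]].
exists (- b), (- a), (fun t => sg (- t)); split.
- by rewrite lexle_opp.
- by rewrite opprK.
- by rewrite opprK.
- move=> s t bs sa' bt ta'.
  have L1 u v : lexle u (- v) -> lexle v (- u) by rewrite -lexle_opp opprK.
  have L2 u v : lexle (- v) u -> lexle (- u) v by rewrite -lexle_opp opprK.
  rewrite Hi; try by [apply: L1|apply: L2].
  by rewrite -lexabs_opp; congr lexabs; veq.
- have L1 u v : lexle u (- v) -> lexle v (- u) by rewrite -lexle_opp opprK.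
  have L2 u v : lexle (- v) u -> lexle (- u) v by rewrite -lexle_opp opprK.
  move=> z; rewrite HS; split => -[t [H1 H2 H3]]; exists (- t).
    by split; [apply: L2; rewrite opprK|apply: L1; rewrite opprK|rewrite opprK].
  by split; [apply: L1|apply: L2|].
Qed.

Lemma seg_tail x y S z : is_segment d x y S -> S z ->
  exists T, is_segment d z y T /\ forall v, T v -> S v /\ lexle (d x z) (d x v).
Proof.
move=> [a [b [sg [ab sa sb Hi HS]]]] /[dup] Sz /HS [t [hat tb E]].
exists (fun v => exists s, [/\ lexle t s, lexle s b & sg s = v]); split.
  exists t, b, sg; split => //.
    by move=> s s' ts sb' ts' sb''; apply: Hi => //; [exact: lexle_trans hat ts|exact: lexle_trans hat ts'].
move=> v [s [ts sb' <-]]; have hs := lexle_trans hat ts.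
split; first by apply/HS; exists s; split.
rewrite -E -sa !Hi ?lexle_refl //.
by rewrite !lexabs_pos -?lexle_sub // lexle_add.
Qed.

Lemma tripod_len q a b S1 S2 w : is_segment d q a S1 -> is_segment d q b S2 ->
  is_segment d q w (fun v => S1 v /\ S2 v) -> d a b = d a w + d w b.
Proof.
move=> s1 s2 sw.
have [w1 w2] := seg_y sw.
have [Ta [sTa HTa]] := seg_tail s1 w1.
have [Tb [sTb HTb]] := seg_tail s2 w2.
have sTa' := seg_rev sTa.
case: Ht => _ [_ [H3 _]].
have := H3 _ _ _ _ _ sTa' sTb.
have Hint v : Ta v -> Tb v -> v = w.
  move=> /HTa [v1 le1] /HTb [v2 _].
  have := seg_dist sw (conj v1 v2) => E.
  apply: d_zero; apply: lexle_anti; last exact: d_nn.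
  rewrite -(lexle_add _ _ (d q v)) add0r addrC E //.
move=> /(_ Hint) sab.
by rewrite (seg_dist sab) //; right; apply: seg_x sTb.
Qed.

Lemma tripod q a b : exists w, [/\ d q a = d q w + d w a, d q b = d q w + d w b &
  d a b = d a w + d w b].
Proof.
case: Ht => _ [Hs [_ H4]].
have [S1 s1] := Hs q a; have [S2 s2] := Hs q b.
have [w sw] := H4 _ _ _ _ _ s1 s2.
have [w1 w2] := seg_y sw.
exists w; split; [by rewrite (seg_dist s1 w1)|by rewrite (seg_dist s2 w2)|].
exact: tripod_len sw.
Qed.

Definition gp q a b := d q a + d q b - d a b.

Lemma gp_seg q a b S1 S2 w : is_segment d q a S1 -> is_segment d q b S2 ->
  is_segment d q w (fun v => S1 v /\ S2 v) -> gp q a b = d q w + d q w.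
Proof.
move=> s1 s2 sw; have [w1 w2] := seg_y sw.
rewrite /gp (tripod_len s1 s2 sw) -(seg_dist s1 w1) -(seg_dist s2 w2) (d_sym w a).
veq.
Qed.

Lemma hyp0_core q a b c Sa Sb Sc wab wac wbc :
  is_segment d q a Sa -> is_segment d q b Sb -> is_segment d q c Sc ->
  is_segment d q wab (fun v => Sa v /\ Sb v) ->
  is_segment d q wac (fun v => Sa v /\ Sc v) ->
  is_segment d q wbc (fun v => Sb v /\ Sc v) ->
  lexle (d q wac) (d q wbc) -> lexle (d q wac) (d q wab).
Proof.
move=> sa sb sc sab sac sbc le1.
have [wa wc] := seg_y sac.
have [z [zS zd]] := seg_point sbc (d_nn _ _) le1.
have zc : Sc z by case: zS.
have zb : Sb z by case: zS.
have zw : z = wac by apply: (seg_inj sc) => //.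
subst z.
have Hab : Sa wac /\ Sb wac by [].
rewrite -(seg_dist sab Hab) -{1}(addr0 (d q wac)) lexle_addl.
exact: d_nn.
Qed.

Lemma gp_sym q a b : gp q a b = gp q b a.
Proof. by rewrite /gp (d_sym a b) (addrC (d q a)). Qed.

Lemma hyp0 q a b c : lexle (gp q a c) (gp q a b) \/ lexle (gp q b c) (gp q a b).
Proof.
case: Ht => _ [Hs [_ H4]].
have [Sa sa] := Hs q a; have [Sb sb] := Hs q b; have [Sc sc] := Hs q c.
have [wab sab] := H4 _ _ _ _ _ sa sb.
have [wac sac] := H4 _ _ _ _ _ sa sc.
have [wbc sbc] := H4 _ _ _ _ _ sb sc.
have [wba sba] := H4 _ _ _ _ _ sb sa.
case: (lexle_total (d q wac) (d q wbc)) => H.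
  left; rewrite (gp_seg sa sb sab) (gp_seg sa sc sac).
  by apply: lexleD; apply: (hyp0_core sa sb sc sab sac sbc H).
right; rewrite [gp q a b]gp_sym (gp_seg sb sa sba) (gp_seg sb sc sbc).
by apply: lexleD; apply: (hyp0_core sb sa sc sba sbc sac H).
Qed.

Lemma fourpt u v w t : lexle (d u t + d v w) (d u w + d v t) \/
                       lexle (d u t + d v w) (d u v + d w t).
Proof.
case: (hyp0 u v w t) => H; [left|right]; move: H; rewrite /gp => H;
  rewrite lexle_sub; move: H; rewrite lexle_sub.
  by have -> : d u v + d u w - d v w - (d u v + d u t - d v t) =
     d u w + d v t - (d u t + d v w) by veq.
by have -> : d u v + d u w - d v w - (d u w + d u t - d w t) =
     d u v + d w t - (d u t + d v w) by veq.
Qed.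

End Tree.
Definition zs (m : nat) (t : int) (v : 'rV[int]_m) : 'rV[int]_m := \row_i (t * v 0 i).

Lemma min_nat (P : nat -> Prop) N : P N -> exists N0, P N0 /\ forall M, P M -> (N0 <= M)%N.
Proof.
elim/ltn_ind: N => N IH PN.
case: (classic (exists M, P M /\ (M < N)%N)) => [[M [PM lt]]|H].
  exact: IH PM.
exists N; split => // M PM; rewrite leqNgt; apply/negP => lt; apply: H; by exists M.
Qed.

Section Free.
Variables (G : Type) (mul : G -> G -> G) (e : G) (inv : G -> G).
Hypothesis HG : is_group mul e inv.
Variable C : G -> Prop.
Hypotheses (Ce : C e) (Cmul : forall x y, C x -> C y -> C (mul x y))
  (Cinv : forall x, C x -> C (inv x)).

Definition additive (mm : nat) (psi : G -> 'rV[int]_mm) :=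
  forall x y, C x -> C y -> psi (mul x y) = psi x + psi y.

Lemma add_e mm (psi : G -> 'rV[int]_mm) : additive psi -> psi e = 0.
Proof.
move=> H; have : psi (mul e e) = psi e + psi e by apply: H.
case: HG => _ [H1 _]; rewrite H1 => /(congr1 (fun v => v - psi e)).
by rewrite subrr addrK => ->.
Qed.

Lemma add_inv mm (psi : G -> 'rV[int]_mm) x : additive psi -> C x -> psi (inv x) = - psi x.
Proof.
move=> H Cx; have : psi (mul x (inv x)) = psi x + psi (inv x) by apply: H => //; apply: Cinv.
case: HG => _ [_ [_ [_ H5]]]; rewrite H5 (add_e H) => /(congr1 (fun v => v - psi x)).
by rewrite add0r addrC addKr => ->.
Qed.

Lemma add_pow mm (psi : G -> 'rV[int]_mm) g (t : int) : additive psi -> C g ->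
  exists w, C w /\ psi w = zs t (psi g).
Proof.
move=> H Cg.
have Hn (k : nat) : exists w, C w /\ psi w = zs k%:Z (psi g).
  elim: k => [|k [w [Cw Hw]]].
    by exists e; split => //; rewrite (add_e H); apply/rowP => i; rewrite !mxE mul0r.
  exists (mul g w); split; first exact: Cmul.
  by rewrite H // Hw; apply/rowP => i; rewrite !mxE; rewrite -[k.+1]addn1 PoszD; ring.
case: t => k; first exact: Hn.
have [w [Cw Hw]] := Hn k.+1; exists (inv w); split; first exact: Cinv.
by rewrite (add_inv H Cw) Hw NegzE; apply/rowP => i; rewrite !mxE; ring.
Qed.

Lemma free_sub j : forall mm (psi : G -> 'rV[int]_mm), additive psi ->
  (forall x, C x -> (ht (psi x) <= j)%N) ->
  exists r (phi : G -> 'rV[int]_r), [/\ (r <= j)%N, additive phi,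
    (forall v, exists x, C x /\ phi x = v) &
    (forall x, C x -> (phi x = 0 <-> psi x = 0))].
Proof.
elim: j => [|j IH] mm psi Hadd Hht.
  exists 0%N, (fun _ => 0); split => //.
  - by move=> x y _ _; rewrite addr0.
  - by move=> v; exists e; split => //; apply/rowP => -[].
  - by move=> x Cx; rewrite (ht0 (Hht x Cx)).
case: (ltnP j mm) => [hj|hj]; last first.
  have [r [phi [rj H1 H2 H3]]] := IH mm psi Hadd
    (fun x _ => leq_trans (ht_max (psi x)) hj).
  by exists r, phi; split => //; apply: leq_trans rj _.
pose J := Ordinal hj.
pose f x := psi x 0 J.
have fadd x y : C x -> C y -> f (mul x y) = f x + f y.
  by move=> Cx Cy; rewrite /f Hadd // mxE.
have finv x : C x -> f (inv x) = - f x.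
  by move=> Cx; rewrite /f (add_inv Hadd Cx) mxE.
have Hup x (i : 'I_mm) : C x -> (j < i)%N -> psi x 0 i = 0.
  by move=> Cx ji; move/htP: (Hht x Cx); apply.
case: (classic (forall x, C x -> f x = 0)) => [Hz|Hnz].
  have Hht' x : C x -> (ht (psi x) <= j)%N.
    move=> Cx; apply/htP => i ji; rewrite leq_eqVlt in ji.
    case/orP: ji => [/eqP ji|ji]; last exact: Hup.
    have -> : i = J by apply: val_inj; rewrite /= ji.
    exact: Hz.
  have [r [phi [rj H1 H2 H3]]] := IH mm psi Hadd Hht'.
  by exists r, phi; split => //; apply: leq_trans rj _.
have [x1 [Cx1 nz1]] : exists x, C x /\ f x <> 0.
  apply: NNPP => H; apply: Hnz => x Cx; apply: NNPP => nz; apply: H; by exists x.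
have [N PN] : exists N, exists x, C x /\ f x = (N.+1)%:Z.
  case E: (f x1) => [n|n].
    case: n E => [|n] E; first by move: nz1; rewrite E.
    by exists n, x1.
  by exists n, (inv x1); split; [apply: Cinv|rewrite finv // E NegzE opprK].
have [N0 [[g0 [Cg0 fg0]] Hmin]] := @min_nat (fun N => exists x, C x /\ f x = (N.+1)%:Z) N PN.
pose d0 : int := (N0.+1)%:Z.
have d0nz : d0 != 0 by [].
have d0pos : 0 < d0 by [].
have Hdiv x : C x -> f x = (f x %/ d0)%Z * d0.
  move=> Cx; have [w [Cw Hw]] := add_pow (- (f x %/ d0)%Z) Hadd Cg0.
  have fy : f (mul x w) = (f x %% d0)%Z.
    rewrite fadd // {2}/f Hw mxE -/(f g0) fg0 {1}(divz_eq (f x) d0) -/d0; ring.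
  case E: (f x %% d0)%Z => [r|r]; last first.
    by move: (modz_ge0 (f x) d0nz); rewrite E.
  case: r E => [|M] E; first by rewrite {1}(divz_eq (f x) d0) E addr0.
  exfalso; have := Hmin M; have lt := ltz_pmod (f x) d0pos.
  rewrite E /d0 in lt.
  have : (N0 <= M)%N by apply: Hmin; exists (mul x w); split; [exact: Cmul|rewrite fy E].
  move: lt; rewrite ltz_nat; lia.
pose qf x := (f x %/ d0)%Z.
have qadd x y : C x -> C y -> qf (mul x y) = qf x + qf y.
  move=> Cx Cy; apply: (mulIf d0nz); rewrite -Hdiv ?mulrDl -?Hdiv //; [exact: fadd|exact: Cmul].
pose psi' x := psi x - zs (qf x) (psi g0).
have Hadd' : additive psi'.
  move=> x y Cx Cy; rewrite /psi' Hadd // qadd //; apply/rowP => i; rewrite !mxE; ring.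
have Hht' x : C x -> (ht (psi' x) <= j)%N.
  move=> Cx; apply/htP => i ji; rewrite !mxE; rewrite leq_eqVlt in ji.
  case/orP: ji => [/eqP ji|ji]; last by rewrite !Hup // mulr0 subr0.
  have -> : i = J by apply: val_inj; rewrite /= ji.
  rewrite -/(f x) -/(f g0) fg0 -/d0 {1}(Hdiv x Cx); rewrite /qf; ring.
have [r' [phi' [rj add' surj' ker']]] := IH mm psi' Hadd' Hht'.
exists (r' + 1)%N, (fun x => \row_(i < r' + 1) match split i with inl i' => phi' x 0 i' | inr _ => qf x end).
split.
- by rewrite addn1.
- move=> x y Cx Cy; apply/rowP => i; rewrite !mxE; case: splitP => [i' _|k _].
    by rewrite add' // mxE.
  by rewrite qadd.
- move=> v; pose v' := \row_(i < r') v 0 (lshift 1 i).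
  pose t := v 0 (rshift r' ord0).
  have [x' [Cx' Hx']] := surj' v'.
  have [w [Cw Hw]] := add_pow (t - qf x') Hadd Cg0.
  have qw : qf w = t - qf x'.
    apply: (mulIf d0nz); rewrite -Hdiv // /f Hw mxE -/(f g0) fg0 //.
  have pw : phi' w = 0.
    apply/(ker' w Cw); rewrite /psi' Hw qw; apply/rowP => i; rewrite !mxE; ring.
  exists (mul x' w); split; first exact: Cmul.
  apply/rowP => i; rewrite !mxE; case: splitP => [i' Hi|k Hk].
    rewrite add' // pw addr0 Hx' mxE; congr (v 0 _); apply: val_inj => /=; by rewrite Hi.
  rewrite qadd // qw addrC subrK /t; congr (v 0 _); apply: val_inj => /=.
  by rewrite Hk; case: k {Hk} => -[|] //.
- move=> x Cx; split => [H0|H0].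
    have hq : qf x = 0.
      move/rowP: H0 => /(_ (rshift r' ord0)); rewrite !mxE; case: splitP => [i' Hi|k Hk] //.
      by move: (ltn_ord i'); rewrite -Hi /= addn0 ltnn.
    have hp : phi' x = 0.
      apply/rowP => i; move/rowP: H0 => /(_ (lshift 1 i)); rewrite !mxE.
      case: splitP => [i' Hi|k Hk].
        by have -> : i' = i by apply: val_inj; move: Hi => /= ->.
      by move: (ltn_ord i); move: Hk => /= ->; rewrite ltnNge leq_addr.
    have := (ker' x Cx).1 hp; rewrite /psi' hq => /rowP H; apply/rowP => i.
    by move: (H i); rewrite !mxE mul0r subr0.
  have hq : qf x = 0.
    by apply: (mulIf d0nz); rewrite mul0r -Hdiv // /f H0 mxE.
  have hp : phi' x = 0.
    apply/(ker' x Cx); rewrite /psi' hq H0; apply/rowP => i; rewrite !mxE; ring.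
  apply/rowP => i; rewrite !mxE; case: splitP => [i' _|k _]; first by rewrite hp mxE.
  by rewrite hq.
Qed.

End Free.
Section Geo.
Variables (m : nat) (X : Type) (d : X -> X -> 'rV[int]_m).
Variables (G : Type) (mul : G -> G -> G) (e : G) (inv : G -> G) (act : G -> X -> X).
Hypothesis Ht : is_lambda_tree d.
Hypothesis HG : is_group mul e inv.
Hypothesis Hact : is_isometric_action mul e d act.
Variables (x0 p : X) (t : nat).
Hypothesis Hlarge : ~~ (ht (d x0 p) <= t)%N.

Let sm (v : 'rV[int]_m) := (ht v <= t)%N.

Lemma iso g a b : d (act g a) (act g b) = d a b.
Proof. by case: Hact => _ [_ H]. Qed.

Lemma act_inv g a : act g (act (inv g) a) = a.
Proof.
case: Hact => H1 [H2 _]; case: HG => _ [_ [_ [_ H5]]].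
by rewrite -H2 H5 H1.
Qed.

Lemma ltL s : sm s -> lexlt s (d x0 p).
Proof. by move=> H; apply: lt_small_large H (d_nn Ht _ _) Hlarge. Qed.

Lemma le_shift (a b c : 'rV[int]_m) : lexle a (b + c) -> lexle (a - c) b.
Proof. by rewrite -(lexle_add _ _ (- c)) addrK. Qed.

Lemma hom x z : sm (d x0 (act x x0)) -> sm (d p (act z p)) ->
  d x0 (act (mul x z) p) + d x0 p = d x0 (act x p) + d x0 (act z p).
Proof.
move=> sx sz.
set u := act (inv x) x0.
have dux : d u x0 = d x0 (act x x0) by rewrite -(iso x) act_inv.
have duzp : d u (act z p) = d x0 (act (mul x z) p).
  by rewrite -(iso x) act_inv; case: Hact => _ [H2 _]; rewrite H2.
have dup : d u p = d x0 (act x p) by rewrite -(iso x) act_inv.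
set S1 := d u (act z p) + d x0 p.
set S2 := d u p + d x0 (act z p).
set S3 := d u x0 + d p (act z p).
have s3 : sm S3 by rewrite /S3 dux; apply: htD.
have l31 : lexlt S3 S1.
  apply: lexlt_le_trans (ltL s3) _.
  by rewrite /S1 -[X in lexle X _]add0r lexle_add; apply: d_nn.
have l32 : lexlt S3 S2.
  have s3z : sm (S3 + d p (act z p)) by apply: htD.
  have h1 := ltL s3z.
  have h2 : lexle (d x0 p - d p (act z p)) (d x0 (act z p)).
    apply: le_shift; rewrite (d_sym Ht p); exact: d_tri.
  have h3 : lexlt S3 (d x0 p - d p (act z p)).
    by rewrite -(lexlt_add _ _ (d p (act z p))) subrK.
  apply: lexlt_le_trans h3 (lexle_trans h2 _).
  by rewrite /S2 -[X in lexle X _]add0r lexle_add; apply: d_nn.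
have e12 : S1 = S2.
  apply: lexle_anti.
    case: (fourpt Ht u x0 p (act z p)) => //.
    by move=> H; exfalso; apply: (lexlt_nle l31).
  case: (fourpt Ht u x0 (act z p) p).
    by [].
  move=> H; exfalso; apply: (lexlt_nle l32).
  by move: H; rewrite /S3 (d_sym Ht (act z p) p).
by move: e12; rewrite /S1 /S2 duzp dup.
Qed.


Lemma lt_of_sum (a b c : 'rV[int]_m) : lexlt 0 a -> lexle 0 b -> c = a + b -> lexlt 0 c.
Proof. by move=> ha hb ->; rewrite -(addr0 0); apply: lexltD. Qed.

Lemma ell_fix x : sm (d x0 (act x x0)) -> sm (d p (act x p)) -> elliptic act x ->
  d x0 (act x p) = d x0 p.
Proof.
move=> sx sp [q Hq].
have dq a : d q (act x a) = d q a by rewrite -{1}Hq iso.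
have gpx a b : gp d q (act x a) (act x b) = gp d q a b by rewrite /gp !dq iso.
set c := gp d q x0 p.
set c' := gp d q x0 (act x p).
have ga : gp d q x0 (act x x0) = d q x0 + d q x0 - d x0 (act x x0) by rewrite /gp dq.
have gb : gp d q p (act x p) = d q p + d q p - d p (act x p) by rewrite /gp dq.
have cc : c = c'.
  case: (lexle_total (d q x0) (d q p)) => hr.
  - have lcb : lexlt c (gp d q p (act x p)).
      rewrite lexlt_sub; apply: (@lt_of_sum (d x0 p - d p (act x p)) (d q p - d q x0)).
      + by rewrite -lexlt_sub; apply: ltL.
      + by rewrite -lexle_sub.
      + by rewrite gb /c /gp; veq.
    apply: lexle_anti.
      case: (hyp0 Ht q x0 (act x p) p) => //.
      rewrite gp_sym // => H; apply: lexltW; exact: lexlt_le_trans lcb H.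
    case: (hyp0 Ht q x0 p (act x p)) => // H; exfalso.
    exact: (lexlt_nle lcb).
  - have lca : lexlt c (gp d q x0 (act x x0)).
      rewrite lexlt_sub; apply: (@lt_of_sum (d x0 p - d x0 (act x x0)) (d q x0 - d q p)).
      + by rewrite -lexlt_sub; apply: ltL.
      + by rewrite -lexle_sub.
      + by rewrite ga /c /gp; veq.
    apply: lexle_anti.
      case: (hyp0 Ht q x0 (act x p) (act x x0)) => H.
        apply: lexltW; exact: lexlt_le_trans lca H.
      by move: H; rewrite gp_sym // gpx.
    case: (hyp0 Ht q (act x x0) (act x p) x0) => H.
      by exfalso; apply: (lexlt_nle lca); move: H; rewrite gp_sym // gpx.
    by move: H; rewrite gpx gp_sym.
have : c - c' = d x0 (act x p) - d x0 p by rewrite /c /c' /gp dq; veq.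
by rewrite cc subrr => /esym/eqP; rewrite subr_eq0 => /eqP.
Qed.

Lemma fix_ell x : sm (d x0 (act x x0)) -> sm (d p (act x p)) ->
  d x0 (act x p) = d x0 p -> d (act x x0) p = d x0 p -> elliptic act x.
Proof.
move=> sx sp hx hx'.
have [w [t1 t2 t3]] := tripod Ht p x0 (act x x0).
set sg := d w x0.
have e2 : d w (act x x0) = sg.
  have : d p w + d w (act x x0) = d p w + sg.
    by rewrite -t2 -t1 (d_sym Ht p (act x x0)) hx' (d_sym Ht p x0).
  by move/addrI.
have Es : d x0 (act x x0) = sg + sg by rewrite t3 e2 (d_sym Ht x0 w).
have Epw : d p w = d x0 p - sg by rewrite (d_sym Ht x0 p) t1 addrK.
set sp' := d p (act x p).
have Y : d w (act x p) = d x0 p - sg.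
  have lbc : lexlt (sg + sp') (d p w + d x0 (act x p)).
    rewrite lexlt_sub; apply: (@lt_of_sum (d x0 p) (d x0 p - (d x0 (act x x0) + sp'))).
    - exact: lexle_lt_trans (d_nn Ht _ _) (ltL sx).
    - by rewrite -lexle_sub; apply: lexltW; apply: ltL; apply: htD.
    - by rewrite Epw hx Es; veq.
  have h1 : lexle (d p w + d x0 (act x p)) (d w (act x p) + d x0 p).
    case: (fourpt Ht w x0 (act x p) p) => H.
      by rewrite (d_sym Ht p w).
    by exfalso; apply: (lexlt_nle lbc); move: H; rewrite (d_sym Ht w p) (d_sym Ht (act x p) p).
  have h2 : lexle (d w (act x p) + d x0 p) (d p w + d x0 (act x p)).
    case: (fourpt Ht w x0 p (act x p)) => H.
      by rewrite (d_sym Ht p w).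
    apply: lexltW; apply: lexle_lt_trans lbc; exact: H.
  have := lexle_anti h2 h1; rewrite Epw hx => /addIr.
  done.
exists w; apply/esym/(d_zero Ht); apply: lexle_anti; last exact: d_nn.
have dxx : d (act x x0) (act x w) = sg by rewrite iso (d_sym Ht x0 w).
have dxp : d (act x p) (act x w) = d x0 p - sg by rewrite iso Epw.
case: (fourpt Ht w (act x x0) (act x p) (act x w)) => H.
  move: H; rewrite iso Y dxx.
  by rewrite -(lexle_add _ _ (- d x0 p)) addrK (_ : d x0 p - sg + sg - d x0 p = 0) //; veq.
move: H; rewrite iso e2 dxp.
by rewrite -(lexle_add _ _ (- d x0 p)) addrK (_ : sg + (d x0 p - sg) - d x0 p = 0) //; veq.
Qed.

End Geo.
Lemma ht_drop1 n (v : 'rV[int]_n) t : (ht (Defs.drop1 v) <= t)%N = (ht v <= t.+1)%N.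
Proof.
have E (j : 'I_n.-1) (i : 'I_n) : val i = j.+1 -> Defs.drop1 v 0 j = v 0 i.
  move=> Hi; rewrite /Defs.drop1 mxE; case: insubP => [u _ Hu|].
    by rewrite /=; congr (v 0 _); apply: val_inj; rewrite Hu Hi.
  by rewrite -Hi ltn_ord.
apply/htP/htP => H.
  move=> i ti.
  have hi : (i.-1 < n.-1)%N by have := ltn_ord i; lia.
  rewrite -(E (Ordinal hi)); first by apply: H => /=; lia.
  by rewrite /=; lia.
move=> j tj.
have hj : (j.+1 < n)%N by have := ltn_ord j; lia.
by rewrite (E j (Ordinal hj)) // H.
Qed.
Unset Implicit Arguments.
Theorem corollary3p9
  (G : Type) (mul : G -> G -> G) (e : G) (inv : G -> G)
  (n : nat) (l : G -> 'rV[int]_n) (delta : 'rV[int]_n)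
  (HG : is_group mul e inv) (Htf : torsion_free mul e)
  (Hl : is_length_function mul e inv l)
  (Hhyp : hyperbolic mul inv l delta) (Hreg : regular mul inv l delta)
  (HA : ht delta = 1%N)
  (HB : forall g (m : int), m != 0 ->
          lexlt (l (gzpow mul e inv g m)) (l g) ->
          ht (l g - l (gzpow mul e inv g m)) = 1%N)
  (HC : forall g, g <> e -> lexlt 0 (l g))
  (X : Type) (d : X -> X -> 'rV[int]_(n.-1)) (act : G -> X -> X) (x0 : X)
  (HGamma : chiswell_tree mul e l d act x0)
  (k : nat) (Hk1 : (1 <= k)%N) (Hkn : (k < n)%N)
  (h : G) (Hh : Gk l k.+1 h /\ ~ Gk l k h) :
  let C := fun x : G => Gk l k x /\ exists y, Gk l k y /\ x = mul (mul h y) (inv h) in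
  let E := fun x : G => C x /\ elliptic act x in
  ((* E is a normal subgroup of C *)
   E e /\ (forall x y, E x -> E y -> E (mul x y)) /\ (forall x, E x -> E (inv x)) /\
   (forall c x, C c -> E x -> E (mul (mul c x) (inv c)))) /\
  ((* C/E is free abelian of rank at most k-1 *)
   exists (r : nat) (phi : G -> 'rV[int]_r),
     [/\ (r <= k.-1)%N,
         (forall x y, C x -> C y -> phi (mul x y) = phi x + phi y),
         (forall v, exists x, C x /\ phi x = v) &
         (forall x, C x -> (phi x = 0 <-> E x))]).
Proof.
move=> C E.
have [HA1 [H1g [Hg1 [HVg HgV]]]] := HG.
have [Hl0 [Hlnn [Hlinv Hltri]]] := Hl.
case: HGamma => Htree Hact Hdist Hcover.
have [Hact1 [Hactm Hiso]] := Hact.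
have canc a b : mul (inv a) (mul a b) = b by rewrite HA1 HVg H1g.
have canc' a b : mul a (mul (inv a) b) = b by rewrite HA1 HgV H1g.
have inv_uniq a b : mul a b = e -> inv a = b.
  by move=> H; rewrite -[inv a]Hg1 -H canc.
have GkM x y : Gk l k x -> Gk l k y -> Gk l k (mul x y).
  rewrite /Gk => hx hy; apply: leq_trans (ht_le (Hlnn _) (Hltri x y)) _; exact: htD.
have Gke : Gk l k e by rewrite /Gk Hl0; apply/htP => j _; rewrite mxE.
have GkV x : Gk l k x -> Gk l k (inv x) by rewrite /Gk Hlinv.
have conjM y1 y2 : mul (mul (mul h y1) (inv h)) (mul (mul h y2) (inv h)) =
    mul (mul h (mul y1 y2)) (inv h).
  by rewrite -!HA1 canc.
have conjV y : inv (mul (mul h y) (inv h)) = mul (mul h (inv y)) (inv h).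
  by apply: inv_uniq; rewrite -!HA1 canc canc' HgV.
have Ce : C e by split => //; exists e; split => //; rewrite Hg1 HgV.
have CM x y : C x -> C y -> C (mul x y).
  move=> [gx [y1 [g1 Ex]]] [gy [y2 [g2 Ey]]]; split; first exact: GkM.
  by exists (mul y1 y2); split; [exact: GkM|rewrite Ex Ey conjM].
have CV x : C x -> C (inv x).
  move=> [gx [y [gy Ex]]]; split; first exact: GkV.
  by exists (inv y); split; [exact: GkV|rewrite Ex conjV].
pose p := act h x0.
have Hlarge : ~~ (ht (d x0 p) <= k.-1)%N.
  rewrite /p -Hdist ht_drop1 prednK //; apply/negP; exact: Hh.2.
have smx x : C x -> (ht (d x0 (act x x0)) <= k.-1)%N.
  by move=> [gx _]; rewrite -Hdist ht_drop1 prednK.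
have smp z : C z -> (ht (d p (act z p)) <= k.-1)%N.
  move=> [_ [y [gy ->]]].
  have -> : act (mul (mul h y) (inv h)) p = act h (act y x0).
    by rewrite /p -!Hactm -!HA1 HVg Hg1.
  by rewrite /p Hiso -Hdist ht_drop1 prednK.
pose psi x := d x0 (act x p) - d x0 p.
have Hom x z : C x -> C z -> psi (mul x z) = psi x + psi z.
  move=> Cx Cz; have H := hom Htree HG Hact Hlarge (smx x Cx) (smp z Cz).
  apply/eqP; rewrite -subr_eq0; apply/eqP.
  have -> : psi (mul x z) - (psi x + psi z) =
     (d x0 (act (mul x z) p) + d x0 p) - (d x0 (act x p) + d x0 (act z p)).
    by rewrite /psi; veq.
  by rewrite H subrr.
have psie : psi e = 0 by rewrite /psi Hact1 subrr.
have Hinv x : C x -> psi (inv x) = - psi x.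
  move=> Cx; have := Hom x (inv x) Cx (CV x Cx); rewrite HgV psie.
  by move/(congr1 (fun v => v - psi x)); rewrite sub0r addrC addKr => <-.
have Key x : C x -> (psi x = 0 <-> elliptic act x).
  move=> Cx; split => [H0|Hel].
    apply: (fix_ell Htree Hact Hlarge (smx x Cx) (smp x Cx)).
      by apply/eqP; rewrite -subr_eq0; apply/eqP.
    have : psi (inv x) = 0 by rewrite Hinv // H0 oppr0.
    move=> /eqP; rewrite subr_eq0 => /eqP <-.
    by rewrite -{1}(act_inv HG Hact x p) Hiso.
  by rewrite /psi (ell_fix Htree Hact Hlarge (smx x Cx) (smp x Cx) Hel) subrr.
have Hht x : C x -> (ht (psi x) <= k.-1)%N.
  move=> Cx; apply: leq_trans (smp x Cx); apply: ht_bound.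
    rewrite lexle_sub.
    have -> : psi x - - d p (act x p) = (d x0 (act x p) + d (act x p) p) - d x0 p.
      by rewrite /psi (d_sym Htree (act x p) p); veq.
    by rewrite -lexle_sub; apply: d_tri.
  rewrite lexle_sub.
  have -> : d p (act x p) - psi x = (d x0 p + d p (act x p)) - d x0 (act x p).
    by rewrite /psi; veq.
  by rewrite -lexle_sub; apply: d_tri.
split.
  split; first by split => //; exists x0; rewrite Hact1.
  split.
    move=> x y [Cx ex] [Cy ey]; split; first exact: CM.
    apply/(Key _ (CM _ _ Cx Cy)).
    by rewrite Hom // ((Key x Cx).2 ex) ((Key y Cy).2 ey) addr0.
  split.
    move=> x [Cx ex]; split; first exact: CV.
    by apply/(Key _ (CV _ Cx)); rewrite Hinv // ((Key x Cx).2 ex) oppr0.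
  move=> c x Cc [Cx ex]; have Ccx := CM _ _ Cc Cx; have Cic := CV _ Cc.
  split; first exact: CM.
  apply/(Key _ (CM _ _ Ccx Cic)).
  by rewrite (Hom _ _ Ccx Cic) (Hom _ _ Cc Cx) ((Key x Cx).2 ex) (Hinv _ Cc) addr0 subrr.
have [r [phi [rj Hadd Hsurj Hker]]] := free_sub HG Ce CM CV Hom Hht.
exists r, phi; split => // x Cx.
rewrite Hker // Key //; split => [H|[_ H]] //; by split.
Qed.
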